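(* Fix one of the types I–V with data $J$, $(\phi_j)$, $(n_j)$ as in the context, let $H$ be continuous on $\mathbb{R}$, and fix an admissible index $i$ ($i=0$ for Type I; $i\in J\setminus\{\max J\}$ for Types II–V). Let $\mathbf{x}(s)$ be a solution of $$\mathbf{x}''(s)^\perp\cdot\mathbf{x}'(s)+\sum_{j\in J}\frac{n_j\,\mathbf{e}(\phi_j)\cdot\mathbf{x}'(s)}{\mathbf{e}(\phi_j)^\perp\cdot\mathbf{x}(s)}=(n-1)H(s),\qquad \|\mathbf{x}'(s)\|^2=1,$$ for $s$ near $0$, $s\neq0$ on one side of $0$, taking values in the sector $S_i$, and assume $$\lim_{s\to0}\mathbf{e}(\phi_i)^\perp\cdot\mathbf{x}(s)=0,\qquad \lim_{s\to0}\mathbf{x}(s)=\mathbf{x}_0\neq\mathbf{0}.$$ Then the limit of $\mathbf{x}'(s)$ as $s\to0$ exists and $\lim_{s\to0}\mathbf{e}(\phi_i)\cdot\mathbf{x}'(s)=0$.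
   Context: For $\mathbf{a}=(a,b)\in\mathbb{R}^2$ write $\mathbf{a}^\perp=(-b,a)$; $\mathbf{e}(\phi)=(\cos\phi,\sin\phi)$, $\mathbf{e}(\phi)^\perp=(-\sin\phi,\cos\phi)$. Type data ($J$ a finite set of consecutive integers, $\sum_{j}n_j=n-2$): Type I: $J=\{0\}$, $\phi_0=0$, $n_0=n-2$, $n\ge3$. Type II: $J=\{0,1\}$, $\phi_0=0$, $\phi_1=\pi/2$, $n_0=m$, $n_1=\ell$ ($n=\ell+m+2$, $\ell,m\in\mathbb{N}$). Type III: $J=\{-1,0,1\}$, $\phi_j=j\pi/3$, $n_j\equiv c$ with $c\in\{1,2,4,8\}$ ($n=5,8,14,26$). Type IV: $J=\{-1,0,1,2\}$, $\phi_j=j\pi/4$, $n_{\pm1}=\ell$, $n_0=n_2=k$, $(k,\ell)\in\{(2,2),(5,4),(9,6),(m-2,1),(2m-3,2),(4m-5,4)\}$. Type V: $J=\{-2,\dots,3\}$, $\phi_j=j\pi/6$, $n_j\equiv c$ with $c\in\{1,2\}$. Sector: for Type I, $S_0=\{(x,y):y>0\}$; for Types II–V, $S_i=\{\mathbf{x}\in\mathbb{R}^2:\mathbf{e}(\phi_{i+1})^\perp\cdot\mathbf{x}<0<\mathbf{e}(\phi_i)^\perp\cdot\mathbf{x}\}$. *)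

(* Defs.v *)
From Stdlib Require Import Reals Lra ZArith List.
From Coquelicot Require Import Coquelicot.
Import ListNotations.
Open Scope R_scope.

Inductive kind := TI | TII | TIII | TIV | TV.

(* Coordinates in R^2 are written as pairs of reals (x1, x2).
   e(phi) . (a,b)      = cos phi * a + sin phi * b
   e(phi)^perp . (a,b) = - sin phi * a + cos phi * b *)
Definition edot (phi a b : R) : R := cos phi * a + sin phi * b.
Definition eperpdot (phi a b : R) : R := - sin phi * a + cos phi * b.

(* type_data k n J phi nj : J (as the explicit list of its elements), the
   angles phi_j and multiplicities n_j are the data of type k, and n is the
   corresponding dimension (sum_j n_j = n - 2). *)
Definition type_data (k : kind) (n : nat) (J : list Z) (phi : Z -> R)
    (nj : Z -> nat) : Prop :=
  match k with
  | TI => J = [0%Z] /\ phi 0%Z = 0 /\ nj 0%Z = (n - 2)%nat /\ (3 <= n)%nat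
  | TII => J = [0%Z; 1%Z] /\ phi 0%Z = 0 /\ phi 1%Z = PI / 2 /\
      exists l m : nat, (1 <= l)%nat /\ (1 <= m)%nat /\
        nj 0%Z = m /\ nj 1%Z = l /\ n = (l + m + 2)%nat
  | TIII => J = [(-1)%Z; 0%Z; 1%Z] /\
      (forall j, In j J -> phi j = IZR j * PI / 3) /\
      exists c : nat, (c = 1 \/ c = 2 \/ c = 4 \/ c = 8)%nat /\
        (forall j, In j J -> nj j = c) /\ n = (3 * c + 2)%nat
  | TIV => J = [(-1)%Z; 0%Z; 1%Z; 2%Z] /\
      (forall j, In j J -> phi j = IZR j * PI / 4) /\
      exists k l : nat,
        ((k = 2 /\ l = 2) \/ (k = 5 /\ l = 4) \/ (k = 9 /\ l = 6) \/
         (exists m : nat, (3 <= m /\ k = m - 2 /\ l = 1) \/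
                          (2 <= m /\ k = 2 * m - 3 /\ l = 2) \/
                          (2 <= m /\ k = 4 * m - 5 /\ l = 4)))%nat /\
        nj (-1)%Z = l /\ nj 1%Z = l /\ nj 0%Z = k /\ nj 2%Z = k /\
        n = (2 * k + 2 * l + 2)%nat
  | TV => J = [(-2)%Z; (-1)%Z; 0%Z; 1%Z; 2%Z; 3%Z] /\
      (forall j, In j J -> phi j = IZR j * PI / 6) /\
      exists c : nat, (c = 1 \/ c = 2)%nat /\
        (forall j, In j J -> nj j = c) /\ n = (6 * c + 2)%nat
  end.

Definition Jmax (J : list Z) : Z := fold_right Z.max (hd 0%Z J) J.

Definition admissible (k : kind) (J : list Z) (i : Z) : Prop :=
  match k with
  | TI => i = 0%Z
  | _ => In i J /\ i <> Jmax J
  end.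

Definition in_sector (k : kind) (phi : Z -> R) (i : Z) (a b : R) : Prop :=
  match k with
  | TI => 0 < b
  | _ => eperpdot (phi (i + 1)%Z) a b < 0 /\ 0 < eperpdot (phi i) a b
  end.

Definition Jsum (J : list Z) (phi : Z -> R) (nj : Z -> nat)
    (x1 x2 v1 v2 : R) : R :=
  fold_right (fun j acc =>
    INR (nj j) * edot (phi j) v1 v2 / eperpdot (phi j) x1 x2 + acc) 0 J.

(* Main.v *)
Require Import Defs.
From Stdlib Require Import Reals ZArith List.
From Coquelicot Require Import Coquelicot.
From Stdlib Require Import Lra Lia.
Import ListNotations.
Open Scope R_scope.

Lemma cont_eps (f : R -> R) x : continuous f x ->
  forall eps, 0 < eps -> exists eta, 0 < eta /\
    forall y, Rabs (y - x) < eta -> Rabs (f y - f x) < eps.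
Proof.
  intros Hc eps Heps.
  destruct (proj1 (filterlim_locally f (f x)) Hc (mkposreal eps Heps)) as [eta Heta].
  exists eta; split; [apply cond_pos|].
  intros y Hy. exact (Heta y Hy).
Qed.

Lemma der_cont_pt (f : R -> R) x l : is_derive f x l -> continuity_pt f x.
Proof.
  intros H. apply continuity_pt_filterlim.
  apply (ex_derive_continuous f x). exists l; exact H.
Qed.

Lemma der_cont (f : R -> R) x l : is_derive f x l -> continuous f x.
Proof.
  intros H. apply (ex_derive_continuous f x). exists l; exact H.
Qed.

Lemma record_sign (U : R -> R) (d tau : R) :
  0 < tau -> is_derive U tau d ->
  (forall t, 0 < t <= tau -> U t <= U tau) -> 0 <= d.
Proof.
  intros Ht Hd Hrec.
  destruct (Rle_lt_dec 0 d) as [|Hneg]; [assumption|exfalso].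
  apply is_derive_Reals in Hd.
  destruct (Hd (- d / 2)) as [del Hdel]; [lra|].
  set (h := - Rmin (del / 2) (tau / 2)).
  assert (Hm1 : Rmin (del/2) (tau/2) <= del/2) by apply Rmin_l.
  assert (Hm2 : Rmin (del/2) (tau/2) <= tau/2) by apply Rmin_r.
  assert (Hm3 : 0 < Rmin (del/2) (tau/2)).
  { apply Rmin_pos; [pose proof (cond_pos del)|]; lra. }
  assert (Hdp := cond_pos del).
  specialize (Hdel h).
  assert (Hh0 : h <> 0) by (unfold h; lra).
  assert (Hha : Rabs h < del).
  { unfold h. rewrite Rabs_Ropp, Rabs_pos_eq; lra. }
  specialize (Hdel Hh0 Hha).
  set (q := (U (tau + h) - U tau) / h) in *.
  assert (Hq : U (tau + h) - U tau = q * h) by (unfold q; field; exact Hh0).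
  apply Rabs_def2 in Hdel. destruct Hdel as [Hd1 Hd2].
  assert (U (tau + h) <= U tau) by (apply Hrec; unfold h; lra).
  assert (q < 0) by lra.
  assert (h < 0) by (unfold h; lra).
  nra.
Qed.

Lemma le_eps (a b : R) : (forall eps, 0 < eps -> a <= eps + b) -> a <= b.
Proof.
  intros H. destruct (Rle_lt_dec a b); [assumption|].
  specialize (H ((a - b)/2)). lra.
Qed.

Lemma record_bound (U C D B : R -> R) (m : nat) (K delta tau : R) :
  (forall t, 0 < t < delta -> is_derive U t (D t)) ->
  (forall t, 0 < t < delta ->
     is_derive C t (D t * B t - INR (S m) * C t * D t / U t)) ->
  (forall t, 0 < t < delta -> C t ^ 2 + D t ^ 2 = 1) ->
  (forall t, 0 < t < delta -> 0 < U t) ->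
  (forall eps, 0 < eps -> exists eta, 0 < eta /\
      forall t, 0 < t < eta -> t < delta -> U t < eps) ->
  (forall t, 0 < t < delta -> Rabs (B t) <= K) ->
  0 < tau < delta ->
  (forall t, 0 < t <= tau -> U t <= U tau) ->
  Rabs (C tau) <= K * tau.
Proof.
  intros HU HC Hn HUp HU0 HB Htau Hrec.
  set (Q := fun t => U t ^ S m * C t).
  assert (HQ : forall t, 0 < t < delta ->
            is_derive Q t (U t ^ S m * (D t * B t))).
  { intros t Ht.
    pose proof (HUp t Ht).
    assert (E : U t ^ S m * (D t * B t) =
      INR (S m) * D t * U t ^ pred (S m) * C t +
      U t ^ S m * (D t * B t - INR (S m) * C t * D t / U t)).
    { cbn [pred]. change (U t ^ S m) with (U t * U t ^ m). field. lra. }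
    rewrite E.
    apply (is_derive_mult (fun t => U t ^ S m) C t).
    apply is_derive_pow. apply HU; exact Ht. apply HC; exact Ht.
    intros; apply Rmult_comm. }
  assert (HK0 : 0 <= K).
  { pose proof (HB tau Htau). pose proof (Rabs_pos (B tau)). lra. }
  assert (Hmain : Rabs (Q tau) <= K * U tau ^ S m * tau).
  { apply le_eps. intros eps Heps.
    destruct (HU0 (Rmin eps 1)) as [eta [Heta Heta']].
    { apply Rmin_pos; lra. }
    set (t := Rmin (eta/2) (tau/2)).
    assert (Ht1 : t <= eta/2) by apply Rmin_l.
    assert (Ht2 : t <= tau/2) by apply Rmin_r.
    assert (Ht3 : 0 < t) by (apply Rmin_pos; lra).
    assert (HUt : U t < Rmin eps 1) by (apply Heta'; lra).
    assert (Hm1 : Rmin eps 1 <= eps) by apply Rmin_l.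
    assert (Hm2 : Rmin eps 1 <= 1) by apply Rmin_r.
    assert (HUtp : 0 < U t) by (apply HUp; lra).
    assert (HQt : Rabs (Q t) <= eps).
    { unfold Q. rewrite Rabs_mult.
      assert (HC1 : Rabs (C t) <= 1).
      { pose proof (Hn t ltac:(lra)). apply Rabs_le. nra. }
      rewrite Rabs_pos_eq by (apply pow_le; lra).
      simpl. 
      assert (0 <= U t ^ m <= 1).
      { split. apply pow_le; lra. rewrite <- (pow1 m). apply pow_incr; lra. }
      assert (U t * U t ^ m <= U t) by nra.
      pose proof (Rabs_pos (C t)). nra. }
    destruct (MVT_gen Q t tau (fun s => U s ^ S m * (D s * B s))) as [c [Hc Heq]].
    { intros x Hx. rewrite Rmin_left in Hx by lra. rewrite Rmax_right in Hx by lra.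
      apply HQ. lra. }
    { intros x Hx. rewrite Rmin_left in Hx by lra. rewrite Rmax_right in Hx by lra.
      eapply der_cont_pt. apply HQ. lra. }
    rewrite Rmin_left in Hc by lra. rewrite Rmax_right in Hc by lra.
    assert (Hc0 : 0 < c < delta) by lra.
    assert (HUc : 0 <= U c <= U tau).
    { split. pose proof (HUp c Hc0); lra. apply Hrec. lra. }
    assert (HUcm : U c ^ S m <= U tau ^ S m) by (apply pow_incr; lra).
    assert (HUcm0 : 0 <= U c ^ S m) by (apply pow_le; lra).
    assert (HDc : Rabs (D c) <= 1).
    { pose proof (Hn c Hc0). apply Rabs_le. nra. }
    assert (HBc := HB c Hc0).
    assert (Hdiff : Rabs (Q tau - Q t) <= K * U tau ^ S m * tau).
    { rewrite Heq. rewrite !Rabs_mult. rewrite (Rabs_pos_eq (U c ^ S m)) by lra.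
      rewrite (Rabs_pos_eq (tau - t)) by lra.
      pose proof (Rabs_pos (D c)). pose proof (Rabs_pos (B c)).
      assert (Rabs (D c) * Rabs (B c) <= K).
      { replace K with (1 * K) by ring. apply Rmult_le_compat; lra. }
      assert (0 <= Rabs (D c) * Rabs (B c)) by nra.
      assert (U c ^ S m * (Rabs (D c) * Rabs (B c)) <= U tau ^ S m * K).
      { apply Rmult_le_compat; lra. }
      assert (0 <= U tau ^ S m * K) by nra.
      nra. }
    pose proof (Rabs_triang (Q tau - Q t) (Q t)).
    replace (Q tau - Q t + Q t) with (Q tau) in H by ring.
    lra. }
  unfold Q in Hmain. rewrite Rabs_mult in Hmain.
  assert (HUtau : 0 < U tau) by (apply HUp; lra).
  assert (Hpos : 0 < U tau ^ S m) by (apply pow_lt; lra).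
  rewrite Rabs_pos_eq in Hmain by lra.
  apply (Rmult_le_reg_l (U tau ^ S m)); [assumption|]. nra.
Qed.

Lemma core (U C D B : R -> R) (m : nat) (K delta : R) :
  (forall t, 0 < t < delta -> is_derive U t (D t)) ->
  (forall t, 0 < t < delta ->
     is_derive C t (D t * B t - INR (S m) * C t * D t / U t)) ->
  (forall t, 0 < t < delta -> C t ^ 2 + D t ^ 2 = 1) ->
  (forall t, 0 < t < delta -> 0 < U t) ->
  (forall eps, 0 < eps -> exists eta, 0 < eta /\
      forall t, 0 < t < eta -> t < delta -> U t < eps) ->
  (forall t, 0 < t < delta -> Rabs (B t) <= K) ->
  (forall t, 0 < t < delta -> continuous D t) ->
  0 <= K -> 0 < delta ->
  exists s1, 0 < s1 /\ forall tau, 0 < tau < s1 ->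
    Rabs (C tau) <= K * tau /\ 0 <= D tau.
Proof.
  intros HU HC Hn HUp HU0 HB HDc HK Hdel.
  set (s1 := Rmin delta (/ (2 * K + 2))).
  assert (Hs1a : s1 <= delta) by apply Rmin_l.
  assert (Hs1b : s1 <= / (2 * K + 2)) by apply Rmin_r.
  assert (Hs1p : 0 < s1).
  { apply Rmin_pos; [lra|]. apply Rinv_0_lt_compat; lra. }
  assert (HKs : forall tau, 0 < tau < s1 -> K * tau <= 1/2).
  { intros tau Ht.
    assert (K * tau <= K * / (2 * K + 2)) by (apply Rmult_le_compat_l; lra).
    assert (K * / (2 * K + 2) <= 1/2).
    { apply (Rmult_le_reg_r (2 * K + 2)); [lra|].
      rewrite Rmult_assoc, Rinv_l by lra. lra. }
    lra. }
  set (Rec := fun tau => forall t, 0 < t <= tau -> U t <= U tau).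
  assert (Hgood : forall r, 0 < r < s1 -> Rec r ->
            Rabs (C r) <= K * r /\ 0 <= D r).
  { intros r Hr Hrec. split.
    - eapply record_bound; eauto. lra.
    - eapply record_sign with (U := U) (tau := r). lra. apply HU; lra. exact Hrec. }
  assert (Hgood2 : forall r, 0 < r < s1 -> Rec r -> 4/5 < D r).
  { intros r Hr Hrec. destruct (Hgood r Hr Hrec) as [H1 H2].
    pose proof (HKs r Hr). pose proof (Hn r ltac:(lra)).
    assert (Rabs (C r) <= 1/2) by lra.
    assert (C r ^ 2 <= 1/4).
    { revert H1 H3. unfold Rabs. destruct (Rcase_abs (C r)); intros; nra. }
    nra. }
  exists s1. split; [assumption|].
  intros tau Htau. apply Hgood; [assumption|].
  assert (HUtau : 0 < U tau) by (apply HUp; lra).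
  destruct (HU0 (U tau) HUtau) as [eta [Heta Heta']].
  set (t0 := Rmin (eta/2) (tau/2)).
  assert (Ht01 : t0 <= eta/2) by apply Rmin_l.
  assert (Ht02 : t0 <= tau/2) by apply Rmin_r.
  assert (Ht03 : 0 < t0) by (apply Rmin_pos; lra).
  destruct (continuity_ab_maj U t0 tau) as [tm [Htm1 Htm2]].
  { lra. }
  { intros c Hc. eapply der_cont_pt. apply HU. lra. }
  assert (Hrectm : Rec tm).
  { intros t Ht. destruct (Rlt_le_dec t t0).
    - assert (U t < U tau) by (apply Heta'; lra).
      pose proof (Htm1 tau ltac:(lra)). lra.
    - apply Htm1. lra. }
  assert (HDtm : 4/5 < D tm) by (apply Hgood2; [lra|assumption]).
  set (E := fun r => tm <= r <= tau /\ forall r', tm <= r' <= r -> 1/2 < D r').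
  destruct (completeness E) as [r0 [Hub Hlub]].
  { exists tau. intros r [Hr _]. lra. }
  { exists tm. split; [lra|]. intros r' Hr'. assert (r' = tm) by lra. subst. lra. }
  assert (Hr0a : tm <= r0).
  { apply Hub. split; [lra|]. intros r' Hr'. assert (r' = tm) by lra. subst. lra. }
  assert (Hr0b : r0 <= tau).
  { apply Hlub. intros r [Hr _]. lra. }
  assert (Hbelow : forall r', tm <= r' < r0 -> 1/2 < D r').
  { intros r' Hr'. destruct (Rlt_le_dec (1/2) (D r')) as [|Hn']; [assumption|].
    exfalso.
    assert (is_upper_bound E r').
    { intros r [Hr1 Hr2]. destruct (Rle_lt_dec r r') as [|Hlt]; [assumption|].
      specialize (Hr2 r' ltac:(lra)). lra. }
    specialize (Hlub r' H). lra. }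
  assert (HDr0 : 1/2 <= D r0).
  { destruct (Rle_lt_dec (1/2) (D r0)) as [|Hlt]; [assumption|exfalso].
    destruct (Req_dec r0 tm) as [Heq|Hne].
    { rewrite Heq in Hlt. lra. }
    destruct (cont_eps D r0 (HDc r0 ltac:(lra)) (1/2 - D r0)) as [e [He He']]; [lra|].
    set (r' := Rmax tm (r0 - e/2)).
    assert (r'1 : tm <= r') by apply Rmax_l.
    assert (r'2 : r0 - e/2 <= r') by apply Rmax_r.
    assert (r'3 : r' < r0).
    { unfold r'. apply Rmax_lub_lt; lra. }
    specialize (He' r'). assert (Rabs (r' - r0) < e) by (apply Rabs_def1; lra).
    specialize (He' H). apply Rabs_def2 in He'.
    specialize (Hbelow r' ltac:(lra)). lra. }
  assert (HDall : forall r', tm <= r' <= r0 -> 1/2 <= D r').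
  { intros r' Hr'. destruct (Req_dec r' r0) as [->|]; [assumption|].
    left. apply Hbelow. lra. }
  assert (Hmono : forall a b, tm <= a <= b -> b <= r0 -> U a <= U b).
  { intros a b Hab Hb.
    destruct (Req_dec a b) as [->|Hne]; [lra|].
    destruct (MVT_gen U a b D) as [c [Hc Heq]].
    { intros x Hx. rewrite Rmin_left in Hx by lra. rewrite Rmax_right in Hx by lra.
      apply HU. lra. }
    { intros x Hx. rewrite Rmin_left in Hx by lra. rewrite Rmax_right in Hx by lra.
      eapply der_cont_pt. apply HU. lra. }
    rewrite Rmin_left in Hc by lra. rewrite Rmax_right in Hc by lra.
    pose proof (HDall c ltac:(lra)). nra. }
  assert (Hrecr0 : Rec r0).
  { intros t Ht. destruct (Rle_lt_dec t tm).
    - pose proof (Hrectm t ltac:(lra)). pose proof (Hmono tm r0 ltac:(lra) ltac:(lra)). lra.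
    - apply Hmono; lra. }
  assert (HDr0' : 4/5 < D r0) by (apply Hgood2; [lra|assumption]).
  destruct (Req_dec r0 tau) as [<-|Hne]; [assumption|].
  exfalso.
  destruct (cont_eps D r0 (HDc r0 ltac:(lra)) (D r0 - 1/2)) as [e [He He']]; [lra|].
  set (r1 := Rmin (r0 + e/2) tau).
  assert (r11 : r1 <= r0 + e/2) by apply Rmin_l.
  assert (r12 : r1 <= tau) by apply Rmin_r.
  assert (r13 : r0 < r1) by (apply Rmin_glb_lt; lra).
  assert (E r1).
  { split; [lra|]. intros r' Hr'. destruct (Rlt_le_dec r' r0).
    - apply Hbelow; lra.
    - assert (Rabs (r' - r0) < e) by (apply Rabs_def1; lra).
      specialize (He' r' H). apply Rabs_def2 in He'. lra. }
  specialize (Hub r1 H). lra.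
Qed.

Lemma sinZ (k m : Z) : k <> 0%Z -> (Z.abs k < m)%Z -> sin (IZR k * PI / IZR m) <> 0.
Proof.
  intros Hk Hm.
  assert (Hpi := PI_RGT_0).
  assert (Hpos : forall k, (0 < k)%Z -> (k < m)%Z -> 0 < sin (IZR k * PI / IZR m)).
  { intros k' H1 H2. apply IZR_lt in H1. apply IZR_lt in H2.
    assert (HH : IZR k' * PI / IZR m * IZR m = IZR k' * PI) by (field; lra).
    apply sin_gt_0.
    - apply Rdiv_lt_0_compat; nra.
    - assert (0 < IZR k' * PI / IZR m) by (apply Rdiv_lt_0_compat; nra). nra. }
  destruct (Z_lt_le_dec 0 k).
  - assert (0 < sin (IZR k * PI / IZR m)) by (apply Hpos; lia). lra.
  - assert (0 < sin (IZR (- k) * PI / IZR m)) by (apply Hpos; lia).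
    rewrite opp_IZR in H.
    replace (- IZR k * PI / IZR m) with (- (IZR k * PI / IZR m)) in H.
    2: { field. assert (0 < IZR m) by (apply IZR_lt; lia). lra. }
    rewrite sin_neg in H. lra.
Qed.

Lemma type_facts k n J phi nj i : type_data k n J phi nj -> admissible k J i ->
  NoDup J /\ In i J /\ (1 <= nj i)%nat /\
  (forall j, In j J -> j <> i -> sin (phi j - phi i) <> 0) /\
  (forall a b, in_sector k phi i a b -> 0 < eperpdot (phi i) a b).
Proof.
  intros Ht Ha.
  destruct k; simpl in Ht, Ha.
  - destruct Ht as [-> [Hp [Hn H3]]]. subst i.
    split; [repeat constructor; simpl; tauto|].
    split; [simpl; auto|]. split; [lia|]. split.
    + intros j [<-|[]] Hne. congruence.
    + intros a b Hs. simpl in Hs. unfold eperpdot. rewrite Hp, sin_0, cos_0. lra.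
  - destruct Ht as [-> [Hp0 [Hp1 [l [m [Hl [Hm [Hn0 [Hn1 Hn]]]]]]]]].
    destruct Ha as [Hi _].
    split; [repeat constructor; simpl; intuition lia|].
    split; [assumption|]. split.
    { destruct Hi as [<-|[<-|[]]]; lia. }
    split.
    + intros j Hj Hne.
      destruct Hi as [<-|[<-|[]]]; destruct Hj as [<-|[<-|[]]]; try congruence;
      rewrite Hp0, Hp1.
      * replace (PI/2 - 0) with (PI/2) by ring. rewrite sin_PI2. lra.
      * replace (0 - PI/2) with (- (PI/2)) by ring. rewrite sin_neg, sin_PI2. lra.
    + intros a b [_ Hs]. exact Hs.
  - destruct Ht as [-> [Hp [c [Hc [Hn _]]]]].
    destruct Ha as [Hi _].
    split; [repeat constructor; simpl; intuition lia|].
    split; [assumption|]. split.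
    { rewrite (Hn i Hi). lia. }
    split.
    + intros j Hj Hne.
      replace (phi j - phi i) with (IZR (j - i) * PI / IZR 3)
        by (rewrite (Hp j Hj), (Hp i Hi), minus_IZR; field).
      apply sinZ; [lia|].
      destruct Hi as [<-|[<-|[<-|[]]]]; destruct Hj as [<-|[<-|[<-|[]]]]; lia.
    + intros a b [_ Hs]. exact Hs.
  - destruct Ht as [-> [Hp [kk [l [Hkl [Hm1 [H1 [H0 [H2 Hn]]]]]]]]].
    destruct Ha as [Hi _].
    split; [repeat constructor; simpl; intuition lia|].
    split; [assumption|]. split.
    { assert (1 <= kk /\ 1 <= l)%nat.
      { destruct Hkl as [[-> ->]|[[-> ->]|[[-> ->]|[mm [[? [-> ->]]|[[? [-> ->]]|[? [-> ->]]]]]]]]; lia. }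
      destruct Hi as [<-|[<-|[<-|[<-|[]]]]]; lia. }
    split.
    + intros j Hj Hne.
      replace (phi j - phi i) with (IZR (j - i) * PI / IZR 4)
        by (rewrite (Hp j Hj), (Hp i Hi), minus_IZR; field).
      apply sinZ; [lia|].
      destruct Hi as [<-|[<-|[<-|[<-|[]]]]]; destruct Hj as [<-|[<-|[<-|[<-|[]]]]]; lia.
    + intros a b [_ Hs]. exact Hs.
  - destruct Ht as [-> [Hp [c [Hc [Hn _]]]]].
    destruct Ha as [Hi _].
    split; [repeat constructor; simpl; intuition lia|].
    split; [assumption|]. split.
    { rewrite (Hn i Hi). lia. }
    split.
    + intros j Hj Hne.
      replace (phi j - phi i) with (IZR (j - i) * PI / IZR 6)
        by (rewrite (Hp j Hj), (Hp i Hi), minus_IZR; field).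
      apply sinZ; [lia|].
      destruct Hi as [<-|[<-|[<-|[<-|[<-|[<-|[]]]]]]];
      destruct Hj as [<-|[<-|[<-|[<-|[<-|[<-|[]]]]]]]; lia.
    + intros a b [_ Hs]. exact Hs.
Qed.

Lemma Jsum_cons a J phi nj x1 x2 v1 v2 :
  Jsum (a :: J) phi nj x1 x2 v1 v2 =
  INR (nj a) * edot (phi a) v1 v2 / eperpdot (phi a) x1 x2 + Jsum J phi nj x1 x2 v1 v2.
Proof. reflexivity. Qed.

Lemma Jsum_split J i phi nj x1 x2 v1 v2 : NoDup J -> In i J ->
  Jsum J phi nj x1 x2 v1 v2 =
  INR (nj i) * edot (phi i) v1 v2 / eperpdot (phi i) x1 x2 +
  Jsum (remove Z.eq_dec i J) phi nj x1 x2 v1 v2.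
Proof.
  induction J as [|a J IH]; intros Hnd Hi; [destruct Hi|].
  apply NoDup_cons_iff in Hnd. destruct Hnd as [Hna Hnd].
  simpl remove. destruct (Z.eq_dec i a) as [->|Hne].
  - rewrite Jsum_cons, notin_remove by assumption. reflexivity.
  - destruct Hi as [->|Hi]; [congruence|].
    rewrite !Jsum_cons, (IH Hnd Hi). ring.
Qed.

Lemma perp_bound a X Y : Rabs (- sin a * X + cos a * Y) <= Rabs X + Rabs Y.
Proof.
  eapply Rle_trans; [apply Rabs_triang|].
  rewrite !Rabs_mult, Rabs_Ropp.
  pose proof (SIN_bound a). pose proof (COS_bound a).
  assert (Rabs (sin a) <= 1) by (apply Rabs_le; lra).
  assert (Rabs (cos a) <= 1) by (apply Rabs_le; lra).
  pose proof (Rabs_pos X). pose proof (Rabs_pos Y).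
  pose proof (Rabs_pos (sin a)). pose proof (Rabs_pos (cos a)).
  nra.
Qed.

Lemma edot_bound a v1 v2 : v1 ^ 2 + v2 ^ 2 = 1 -> Rabs (edot a v1 v2) <= 1.
Proof.
  intros H. unfold edot. pose proof (sin2_cos2 a). unfold Rsqr in H0.
  assert (Hsq : (cos a * v1 + sin a * v2)^2 + (cos a * v2 - sin a * v1)^2 = 1).
  { replace 1 with ((sin a * sin a + cos a * cos a) * (v1 ^ 2 + v2 ^ 2)) by (rewrite H0, H; ring).
    ring. }
  set (w := cos a * v1 + sin a * v2) in *.
  assert (Hw : w ^ 2 <= 1) by (pose proof (pow2_ge_0 (cos a * v2 - sin a * v1)); lra).
  clear -Hw. apply Rabs_le. split; nra.
Qed.

Lemma frac_bound (N ed den e : R) : 0 <= N -> Rabs ed <= 1 -> 0 < Rabs e ->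
  Rabs e / 2 <= Rabs den -> Rabs (N * ed / den) <= N * 2 / Rabs e.
Proof.
  intros HN Hed He Hden.
  assert (Hd0 : 0 < Rabs den) by lra.
  unfold Rdiv. rewrite !Rabs_mult, Rabs_inv, (Rabs_pos_eq N) by assumption.
  assert (/ Rabs den <= 2 * / Rabs e).
  { replace (2 * / Rabs e) with (/ (Rabs e / 2)) by (field; lra).
    apply Rinv_le_contravar; lra. }
  pose proof (Rabs_pos ed).
  assert (0 <= / Rabs den) by (left; apply Rinv_0_lt_compat; lra).
  assert (Rabs ed * / Rabs den <= 1 * (2 * / Rabs e)) by (apply Rmult_le_compat; lra).
  assert (0 <= Rabs ed * / Rabs den) by nra.
  nra.
Qed.

Lemma Jsum_bound (D0 : R -> Prop) (x1 x2 v1 v2 : R -> R) (x01 x02 : R)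
    phi nj :
  (forall eps, 0 < eps -> exists eta, 0 < eta /\
     forall s, D0 s -> Rabs s < eta -> Rabs (x1 s - x01) < eps) ->
  (forall eps, 0 < eps -> exists eta, 0 < eta /\
     forall s, D0 s -> Rabs s < eta -> Rabs (x2 s - x02) < eps) ->
  (forall s, D0 s -> v1 s ^ 2 + v2 s ^ 2 = 1) ->
  forall L, (forall j, In j L -> eperpdot (phi j) x01 x02 <> 0) ->
  exists eta K, 0 < eta /\ 0 <= K /\ forall s, D0 s -> Rabs s < eta ->
    Rabs (Jsum L phi nj (x1 s) (x2 s) (v1 s) (v2 s)) <= K.
Proof.
  intros Hx1 Hx2 Hv L. induction L as [|j L IH]; intros HL.
  - exists 1, 0. split; [lra|split; [lra|]]. intros s _ _. simpl. rewrite Rabs_R0. lra.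
  - destruct IH as [eta [K [Heta [HK HIH]]]].
    { intros j' Hj'. apply HL. right; exact Hj'. }
    set (e := eperpdot (phi j) x01 x02).
    assert (He : 0 < Rabs e) by (apply Rabs_pos_lt; apply HL; left; reflexivity).
    destruct (Hx1 (Rabs e / 4)) as [e1 [He1 He1']]; [lra|].
    destruct (Hx2 (Rabs e / 4)) as [e2 [He2 He2']]; [lra|].
    exists (Rmin eta (Rmin e1 e2)), (INR (nj j) * 2 / Rabs e + K).
    assert (Hm1 : Rmin eta (Rmin e1 e2) <= eta) by apply Rmin_l.
    assert (Hm2 : Rmin eta (Rmin e1 e2) <= Rmin e1 e2) by apply Rmin_r.
    assert (Hm3 : Rmin e1 e2 <= e1) by apply Rmin_l.
    assert (Hm4 : Rmin e1 e2 <= e2) by apply Rmin_r.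
    assert (HN := pos_INR (nj j)).
    split; [apply Rmin_pos; [lra|apply Rmin_pos; lra]|].
    split.
    { assert (0 <= INR (nj j) * 2 / Rabs e).
      { unfold Rdiv. apply Rmult_le_pos; [lra|]. left; apply Rinv_0_lt_compat; lra. }
      lra. }
    intros s Hs Hss.
    rewrite Jsum_cons.
    eapply Rle_trans; [apply Rabs_triang|].
    apply Rplus_le_compat; [|apply HIH; [assumption|lra]].
    apply frac_bound; [lra|apply edot_bound; apply Hv; assumption|assumption|].
    assert (Hd : Rabs (eperpdot (phi j) (x1 s) (x2 s) - e) < Rabs e / 2).
    { replace (eperpdot (phi j) (x1 s) (x2 s) - e)
        with (- sin (phi j) * (x1 s - x01) + cos (phi j) * (x2 s - x02))
        by (unfold e, eperpdot; ring).
      eapply Rle_lt_trans; [apply perp_bound|].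
      specialize (He1' s Hs ltac:(lra)). specialize (He2' s Hs ltac:(lra)). lra. }
    pose proof (Rabs_triang_inv e (eperpdot (phi j) (x1 s) (x2 s))).
    rewrite <- Rabs_Ropp in Hd.
    replace (- (eperpdot (phi j) (x1 s) (x2 s) - e)) with (e - eperpdot (phi j) (x1 s) (x2 s)) in Hd by ring.
    lra.
Qed.

Lemma lim_eps (D0 : R -> Prop) (f : R -> R) (l : R) :
  filterlim f (within D0 (locally 0)) (locally l) ->
  forall eps, 0 < eps -> exists eta, 0 < eta /\
     forall s, D0 s -> Rabs s < eta -> Rabs (f s - l) < eps.
Proof.
  intros H eps Heps.
  destruct (proj1 (filterlim_locally f l) H (mkposreal eps Heps)) as [eta Heta].
  exists eta. split; [apply cond_pos|].
  intros s Hs Hss. apply (Heta s).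
  change (Rabs (s - 0) < eta). rewrite Rminus_0_r. exact Hss. exact Hs.
Qed.

Lemma eps_lim (D0 : R -> Prop) (f : R -> R) (l : R) :
  (forall eps, 0 < eps -> exists eta, 0 < eta /\
     forall s, D0 s -> Rabs s < eta -> Rabs (f s - l) < eps) ->
  filterlim f (within D0 (locally 0)) (locally l).
Proof.
  intros H. apply filterlim_locally. intros eps.
  destruct (H eps (cond_pos eps)) as [eta [Heta H']].
  exists (mkposreal eta Heta). intros s Hs Hd.
  change (Rabs (f s - l) < eps). apply H'. exact Hd.
  change (Rabs (s - 0) < eta) in Hs. rewrite Rminus_0_r in Hs. exact Hs.
Qed.

Lemma scal_deriv (f : R -> R) (a s df : R) :
  is_derive f s df -> is_derive (fun t => a * f t) s (a * df).
Proof.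
  intros Hf. auto_derive; [exists df; exact Hf|].
  change (fun x : R => f x) with f. rewrite (is_derive_unique f s df Hf). ring.
Qed.

Lemma dot_bound a X Y : Rabs (cos a * X + sin a * Y) <= Rabs X + Rabs Y.
Proof.
  eapply Rle_trans; [apply Rabs_triang|].
  rewrite !Rabs_mult.
  pose proof (SIN_bound a). pose proof (COS_bound a).
  assert (Rabs (sin a) <= 1) by (apply Rabs_le; lra).
  assert (Rabs (cos a) <= 1) by (apply Rabs_le; lra).
  pose proof (Rabs_pos X). pose proof (Rabs_pos Y).
  pose proof (Rabs_pos (sin a)). pose proof (Rabs_pos (cos a)).
  nra.
Qed.

Lemma y_bound c y : c ^ 2 + y ^ 2 = 1 -> 0 <= y -> Rabs (y - 1) <= Rabs c.
Proof.
  intros H Hy.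
  assert (Hy1 : y <= 1) by nra.
  rewrite Rabs_left1 by lra.
  assert (Hc1 : c ^ 2 <= 1) by nra.
  assert (Rabs c <= 1).
  { unfold Rabs. destruct (Rcase_abs c); nra. }
  assert (c ^ 2 <= Rabs c).
  { replace (c ^ 2) with (Rabs c * Rabs c).
    pose proof (Rabs_pos c). nra.
    rewrite <- Rabs_mult. rewrite Rabs_pos_eq by nra. ring. }
  nra.
Qed.

Lemma lin_deriv (f g : R -> R) (a b s df dg : R) :
  is_derive f s df -> is_derive g s dg ->
  is_derive (fun t => a * f t + b * g t) s (a * df + b * dg).
Proof.
  intros Hf Hg.
  auto_derive.
  split; [exists df; exact Hf| split; [exists dg; exact Hg|exact I]].
  change (fun x : R => f x) with f; change (fun x : R => g x) with g.
  rewrite (is_derive_unique f s df Hf), (is_derive_unique g s dg Hg). ring.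
Qed.

Lemma comp_sig (f : R -> R) (sg tau df : R) :
  is_derive f (sg * tau) df -> is_derive (fun t => f (sg * t)) tau (sg * df).
Proof.
  intros Hf.
  apply (is_derive_comp f (fun t => sg * t) tau df sg Hf).
  auto_derive; [exact I|ring].
Qed.

Theorem proposition3p1 (k : kind) (n : nat) (J : list Z) (phi : Z -> R)
    (nj : Z -> nat) (H : R -> R) (i : Z)
    (sigma delta : R) (x1 x2 v1 v2 a1 a2 : R -> R) (x01 x02 : R) :
  type_data k n J phi nj ->
  (forall s, continuous H s) ->
  admissible k J i ->
  (sigma = 1 \/ sigma = -1) ->
  0 < delta ->
  (forall s, 0 < sigma * s < delta ->
     is_derive x1 s (v1 s) /\ is_derive x2 s (v2 s) /\
     is_derive v1 s (a1 s) /\ is_derive v2 s (a2 s) /\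
     (- a2 s * v1 s + a1 s * v2 s)
       + Jsum J phi nj (x1 s) (x2 s) (v1 s) (v2 s)
       = (INR n - 1) * H s /\
     v1 s ^ 2 + v2 s ^ 2 = 1 /\
     in_sector k phi i (x1 s) (x2 s)) ->
  filterlim (fun s => eperpdot (phi i) (x1 s) (x2 s))
    (within (fun s => 0 < sigma * s < delta) (locally 0)) (locally 0) ->
  filterlim x1 (within (fun s => 0 < sigma * s < delta) (locally 0))
    (locally x01) ->
  filterlim x2 (within (fun s => 0 < sigma * s < delta) (locally 0))
    (locally x02) ->
  (x01, x02) <> (0, 0) ->
  exists l1 l2 : R,
    filterlim v1 (within (fun s => 0 < sigma * s < delta) (locally 0))
      (locally l1) /\
    filterlim v2 (within (fun s => 0 < sigma * s < delta) (locally 0))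
      (locally l2) /\
    filterlim (fun s => edot (phi i) (v1 s) (v2 s))
      (within (fun s => 0 < sigma * s < delta) (locally 0)) (locally 0).
Proof.
  intros Htd Hcont Hadm Hsig Hdel Hsol Hu Hx1 Hx2 Hx0.
  destruct (type_facts k n J phi nj i Htd Hadm) as [Hnd [Hi [HN [Hsin Hsec]]]].
  assert (Hsq : sigma * sigma = 1) by (destruct Hsig; subst; lra).
  assert (Habs : forall s, 0 < sigma * s -> Rabs s = sigma * s).
  { intros s Hs. destruct Hsig; subst.
    - rewrite Rabs_pos_eq; lra.
    - rewrite Rabs_left; lra. }
  assert (Hss : forall s, sigma * (sigma * s) = s).
  { intros s. rewrite <- Rmult_assoc, Hsq. ring. }
  pose proof (lim_eps _ _ _ Hu) as Eu.
  pose proof (lim_eps _ _ _ Hx1) as Ex1.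
  pose proof (lim_eps _ _ _ Hx2) as Ex2.
  clear Hu Hx1 Hx2.
  assert (Hpt : forall eta, 0 < eta -> exists s, 0 < sigma * s < delta /\ Rabs s < eta).
  { intros eta Heta. exists (sigma * Rmin (eta/2) (delta/2)).
    assert (Rmin (eta/2) (delta/2) <= eta/2) by apply Rmin_l.
    assert (Rmin (eta/2) (delta/2) <= delta/2) by apply Rmin_r.
    assert (0 < Rmin (eta/2) (delta/2)) by (apply Rmin_pos; lra).
    rewrite Hss. split; [lra|]. rewrite Habs; rewrite Hss; lra. }
  assert (Hperp0 : eperpdot (phi i) x01 x02 = 0).
  { set (E := eperpdot (phi i) x01 x02).
    destruct (Req_dec E 0) as [|HE]; [assumption|exfalso].
    assert (HEp : 0 < Rabs E) by (apply Rabs_pos_lt; exact HE).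
    destruct (Eu (Rabs E / 3)) as [e1 [He1 He1']]; [lra|].
    destruct (Ex1 (Rabs E / 3)) as [e2 [He2 He2']]; [lra|].
    destruct (Ex2 (Rabs E / 3)) as [e3 [He3 He3']]; [lra|].
    destruct (Hpt (Rmin e1 (Rmin e2 e3))) as [s [Hs Hsa]].
    { apply Rmin_pos; [lra|apply Rmin_pos; lra]. }
    assert (Rmin e1 (Rmin e2 e3) <= e1) by apply Rmin_l.
    assert (Rmin e1 (Rmin e2 e3) <= Rmin e2 e3) by apply Rmin_r.
    assert (Rmin e2 e3 <= e2) by apply Rmin_l.
    assert (Rmin e2 e3 <= e3) by apply Rmin_r.
    specialize (He1' s Hs ltac:(lra)). specialize (He2' s Hs ltac:(lra)).
    specialize (He3' s Hs ltac:(lra)).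
    rewrite Rminus_0_r in He1'.
    assert (Hb : Rabs (E - eperpdot (phi i) (x1 s) (x2 s)) <= Rabs (x1 s - x01) + Rabs (x2 s - x02)).
    { replace (E - eperpdot (phi i) (x1 s) (x2 s))
        with (- sin (phi i) * (x01 - x1 s) + cos (phi i) * (x02 - x2 s))
        by (unfold E, eperpdot; ring).
      rewrite (Rabs_minus_sym (x1 s)), (Rabs_minus_sym (x2 s)). apply perp_bound. }
    pose proof (Rabs_triang (E - eperpdot (phi i) (x1 s) (x2 s)) (eperpdot (phi i) (x1 s) (x2 s))) as Htr.
    replace (E - eperpdot (phi i) (x1 s) (x2 s) + eperpdot (phi i) (x1 s) (x2 s)) with E in Htr by ring.
    lra. }
  assert (Hnz : forall j, In j (remove Z.eq_dec i J) -> eperpdot (phi j) x01 x02 <> 0).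
  { intros j Hj Hz. apply in_remove in Hj. destruct Hj as [Hj Hne].
    specialize (Hsin j Hj Hne). rewrite sin_minus in Hsin.
    unfold eperpdot in Hperp0, Hz.
    apply Hx0.
    assert (x01 * (sin (phi j) * cos (phi i) - cos (phi j) * sin (phi i)) = 0).
    { replace (x01 * (sin (phi j) * cos (phi i) - cos (phi j) * sin (phi i)))
        with (cos (phi j) * (- sin (phi i) * x01 + cos (phi i) * x02)
              - cos (phi i) * (- sin (phi j) * x01 + cos (phi j) * x02)) by ring.
      rewrite Hperp0, Hz. ring. }
    assert (x02 * (sin (phi j) * cos (phi i) - cos (phi j) * sin (phi i)) = 0).
    { replace (x02 * (sin (phi j) * cos (phi i) - cos (phi j) * sin (phi i)))
        with (sin (phi j) * (- sin (phi i) * x01 + cos (phi i) * x02)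
              - sin (phi i) * (- sin (phi j) * x01 + cos (phi j) * x02)) by ring.
      rewrite Hperp0, Hz. ring. }
    apply Rmult_integral in H0. apply Rmult_integral in H1.
    destruct H0 as [H0|H0]; [|contradiction].
    destruct H1 as [H1|H1]; [|contradiction].
    subst. reflexivity. }
  assert (Hunit : forall s, 0 < sigma * s < delta -> v1 s ^ 2 + v2 s ^ 2 = 1)
    by (intros s Hs; apply Hsol; exact Hs).
  destruct (Jsum_bound (fun s => 0 < sigma * s < delta) x1 x2 v1 v2 x01 x02 phi nj
              Ex1 Ex2 Hunit (remove Z.eq_dec i J) Hnz) as [etaR [KR [HetaR [HKR HR]]]].
  destruct (cont_eps H 0 (Hcont 0) 1 ltac:(lra)) as [etaH [HetaH HH]].
  assert (Hva : forall s, 0 < sigma * s < delta -> v1 s * a1 s + v2 s * a2 s = 0).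
  { intros s Hs.
    destruct (Hsol s Hs) as [_ [_ [Hd1 [Hd2 _]]]].
    set (f := fun t => v1 t ^ 2 + v2 t ^ 2).
    assert (Hf : is_derive f s (INR 2 * a1 s * v1 s ^ pred 2 + INR 2 * a2 s * v2 s ^ pred 2)).
    { apply (is_derive_plus (fun t => v1 t ^ 2) (fun t => v2 t ^ 2)); apply is_derive_pow; assumption. }
    assert (Hf0 : is_derive f s 0).
    { apply (is_derive_ext_loc (fun _ => 1)).
      - set (r := Rmin (sigma * s) (delta - sigma * s)).
        assert (Hr : 0 < r) by (apply Rmin_pos; lra).
        exists (mkposreal r Hr). intros t Ht.
        change (Rabs (t - s) < r) in Ht.
        assert (r <= sigma * s) by apply Rmin_l.
        assert (r <= delta - sigma * s) by apply Rmin_r.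
        assert (Rabs (sigma * t - sigma * s) = Rabs (t - s)).
        { replace (sigma * t - sigma * s) with (sigma * (t - s)) by ring.
          rewrite Rabs_mult. destruct Hsig; subst; rewrite ?Rabs_R1, ?Rabs_m1; ring. }
        assert (Hts : 0 < sigma * t < delta).
        { assert (Hlt : Rabs (sigma * t - sigma * s) < r) by lra.
          apply Rabs_def2 in Hlt. lra. }
        unfold f. symmetry. apply Hunit. exact Hts.
      - exact (is_derive_const (K := R_AbsRing) (V := R_NormedModule) 1 s). }
    pose proof (is_derive_unique _ _ _ Hf) as E1.
    pose proof (is_derive_unique _ _ _ Hf0) as E2.
    rewrite E1 in E2. simpl in E2. lra. }
  destruct (nj i) as [|m] eqn:HNm; [lia|].
  pose (u := fun s => eperpdot (phi i) (x1 s) (x2 s)).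
  pose (c := fun s => edot (phi i) (v1 s) (v2 s)).
  pose (d := fun s => eperpdot (phi i) (v1 s) (v2 s)).
  pose (Rs := fun s => Jsum (remove Z.eq_dec i J) phi nj (x1 s) (x2 s) (v1 s) (v2 s)).
  pose (Bf := fun s => (INR n - 1) * H s - Rs s).
  set (K := KR + Rabs (INR n - 1) * (Rabs (H 0) + 1)).
  set (delta' := Rmin delta (Rmin etaR etaH)).
  assert (Hd'1 : delta' <= delta) by apply Rmin_l.
  assert (Hd'2 : delta' <= Rmin etaR etaH) by apply Rmin_r.
  assert (Hd'3 : Rmin etaR etaH <= etaR) by apply Rmin_l.
  assert (Hd'4 : Rmin etaR etaH <= etaH) by apply Rmin_r.
  assert (Hd'p : 0 < delta') by (apply Rmin_pos; [lra|apply Rmin_pos; lra]).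
  assert (Htau : forall tau, 0 < tau < delta' ->
            0 < sigma * (sigma * tau) < delta /\ Rabs (sigma * tau) = tau).
  { intros tau Ht. rewrite Hss. split; [lra|]. rewrite Habs; rewrite Hss; lra. }
  assert (Hdu : forall s, 0 < sigma * s < delta -> is_derive u s (d s)).
  { intros s Hs. destruct (Hsol s Hs) as [H1 [H2 _]].
    apply (lin_deriv x1 x2 (- sin (phi i)) (cos (phi i))); assumption. }
  assert (Hdd : forall s, 0 < sigma * s < delta ->
            is_derive d s (- sin (phi i) * a1 s + cos (phi i) * a2 s)).
  { intros s Hs. destruct (Hsol s Hs) as [_ [_ [H1 [H2 _]]]].
    apply (lin_deriv v1 v2 (- sin (phi i)) (cos (phi i))); assumption. }
  assert (Hdc : forall s, 0 < sigma * s < delta ->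
            is_derive c s (d s * Bf s - INR (S m) * c s * d s / u s)).
  { intros s Hs. destruct (Hsol s Hs) as [_ [_ [H1 [H2 [Heq [Hun Hsc]]]]]].
    pose proof (Hsec _ _ Hsc) as Hup.
    pose proof (Hva s Hs) as Hva'.
    rewrite (Jsum_split J i phi nj _ _ _ _ Hnd Hi), HNm in Heq.
    set (kap := - a2 s * v1 s + a1 s * v2 s) in Heq.
    assert (Ha1 : a1 s = kap * v2 s).
    { unfold kap. replace (a1 s) with (a1 s * (v1 s ^ 2 + v2 s ^ 2)) at 1 by (rewrite Hun; ring).
      replace (a1 s * (v1 s ^ 2 + v2 s ^ 2)) with
        (v1 s * (v1 s * a1 s + v2 s * a2 s) + (- a2 s * v1 s + a1 s * v2 s) * v2 s) by ring.
      rewrite Hva'. ring. }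
    assert (Ha2 : a2 s = - kap * v1 s).
    { unfold kap. replace (a2 s) with (a2 s * (v1 s ^ 2 + v2 s ^ 2)) at 1 by (rewrite Hun; ring).
      replace (a2 s * (v1 s ^ 2 + v2 s ^ 2)) with
        (v2 s * (v1 s * a1 s + v2 s * a2 s) - (- a2 s * v1 s + a1 s * v2 s) * v1 s) by ring.
      rewrite Hva'. ring. }
    replace (d s * Bf s - INR (S m) * c s * d s / u s)
      with (cos (phi i) * a1 s + sin (phi i) * a2 s).
    - apply (lin_deriv v1 v2 (cos (phi i)) (sin (phi i))); assumption.
    - unfold Bf, Rs, c, d, u. rewrite <- Heq.
      rewrite Ha1, Ha2. unfold edot, eperpdot in *. field. lra. }
  destruct (core (fun tau => u (sigma * tau)) (fun tau => c (sigma * tau))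
             (fun tau => sigma * d (sigma * tau)) (fun tau => Bf (sigma * tau))
             m K delta') as [s1 [Hs1 Hcore]].
  - intros t Ht. destruct (Htau t Ht) as [Hs _].
    apply comp_sig. apply Hdu. exact Hs.
  - intros t Ht. destruct (Htau t Ht) as [Hs _].
    pose proof (Hsec _ _ (proj2 (proj2 (proj2 (proj2 (proj2 (proj2 (Hsol _ Hs)))))))) as Hup.
    replace (sigma * d (sigma * t) * Bf (sigma * t) -
             INR (S m) * c (sigma * t) * (sigma * d (sigma * t)) / u (sigma * t))
      with (sigma * (d (sigma * t) * Bf (sigma * t) -
             INR (S m) * c (sigma * t) * d (sigma * t) / u (sigma * t)))
      by (field; exact (Rgt_not_eq _ _ Hup)).
    apply comp_sig. apply Hdc. exact Hs.
  - intros t Ht. destruct (Htau t Ht) as [Hs _].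
    pose proof (Hunit _ Hs) as Hun. pose proof (sin2_cos2 (phi i)) as Hsc. unfold Rsqr in Hsc.
    unfold c, d, edot, eperpdot.
    replace ((sigma * (- sin (phi i) * v1 (sigma * t) + cos (phi i) * v2 (sigma * t))) ^ 2)
      with (sigma * sigma * (- sin (phi i) * v1 (sigma * t) + cos (phi i) * v2 (sigma * t)) ^ 2)
      by ring.
    rewrite Hsq, Rmult_1_l.
    replace 1 with ((sin (phi i) * sin (phi i) + cos (phi i) * cos (phi i)) *
                    (v1 (sigma * t) ^ 2 + v2 (sigma * t) ^ 2)) by (rewrite Hsc, Hun; ring).
    ring.
  - intros t Ht. destruct (Htau t Ht) as [Hs _].
    apply Hsec. apply Hsol. exact Hs.
  - intros eps Heps. destruct (Eu eps Heps) as [eta [Heta Heta']].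
    exists eta. split; [assumption|]. intros t Ht1 Ht2.
    destruct (Htau t (conj (proj1 Ht1) Ht2)) as [Hs Ha].
    specialize (Heta' _ Hs ltac:(lra)). rewrite Rminus_0_r in Heta'.
    apply Rabs_def2 in Heta'. unfold u. lra.
  - intros t Ht. destruct (Htau t Ht) as [Hs Ha].
    unfold Bf, K.
    specialize (HR _ Hs ltac:(lra)).
    assert (HHs : Rabs (H (sigma * t) - H 0) < 1) by (apply HH; rewrite Rminus_0_r; lra).
    assert (Rabs (H (sigma * t)) <= Rabs (H 0) + 1).
    { pose proof (Rabs_triang (H (sigma * t) - H 0) (H 0)) as Htr.
      replace (H (sigma * t) - H 0 + H 0) with (H (sigma * t)) in Htr by ring. lra. }
    eapply Rle_trans; [apply Rabs_triang|].
    rewrite Rabs_Ropp, Rabs_mult.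
    assert (Rabs (INR n - 1) * Rabs (H (sigma * t)) <= Rabs (INR n - 1) * (Rabs (H 0) + 1))
      by (apply Rmult_le_compat_l; [apply Rabs_pos|assumption]).
    unfold Rs. lra.
  - intros t Ht. destruct (Htau t Ht) as [Hs _].
    eapply der_cont. apply scal_deriv. apply comp_sig. apply Hdd. exact Hs.
  - unfold K. pose proof (Rabs_pos (INR n - 1)). pose proof (Rabs_pos (H 0)).
    assert (0 <= Rabs (INR n - 1) * (Rabs (H 0) + 1)) by (apply Rmult_le_pos; lra). lra.
  - exact Hd'p.
  -
    assert (HK0 : 0 <= K).
    { unfold K. pose proof (Rabs_pos (INR n - 1)). pose proof (Rabs_pos (H 0)).
      assert (0 <= Rabs (INR n - 1) * (Rabs (H 0) + 1)) by (apply Rmult_le_pos; lra). lra. }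
    assert (Hfin : forall s, 0 < sigma * s < delta -> Rabs s < s1 ->
              Rabs (c s) <= K * Rabs s /\ Rabs (d s - sigma) <= Rabs (c s)).
    { intros s Hs Hs1'.
      rewrite (Habs s ltac:(lra)) in *.
      destruct (Hcore (sigma * s) ltac:(lra)) as [Hc1 Hd1].
      rewrite Hss in Hc1, Hd1. split; [exact Hc1|].
      assert (Ed : d s - sigma = sigma * (sigma * d s - 1))
        by (rewrite Rmult_minus_distr_l, <- Rmult_assoc, Hsq; ring).
      rewrite Ed.
      rewrite Rabs_mult.
      replace (Rabs sigma) with 1 by (destruct Hsig; subst; rewrite ?Rabs_R1, ?Rabs_m1; ring).
      rewrite Rmult_1_l. apply y_bound; [|exact Hd1].
      pose proof (Hunit s Hs) as Hun. pose proof (sin2_cos2 (phi i)) as Hsc. unfold Rsqr in Hsc.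
      unfold c, d, edot, eperpdot.
      replace ((sigma * (- sin (phi i) * v1 s + cos (phi i) * v2 s)) ^ 2)
        with (sigma * sigma * (- sin (phi i) * v1 s + cos (phi i) * v2 s) ^ 2) by ring.
      rewrite Hsq, Rmult_1_l.
      replace 1 with ((sin (phi i) * sin (phi i) + cos (phi i) * cos (phi i)) *
                      (v1 s ^ 2 + v2 s ^ 2)) by (rewrite Hsc, Hun; ring).
      ring. }
    assert (Hrep : forall s, v1 s = cos (phi i) * c s - sin (phi i) * d s /\
                             v2 s = sin (phi i) * c s + cos (phi i) * d s).
    { intros s. pose proof (sin2_cos2 (phi i)) as Hsc. unfold Rsqr in Hsc.
      unfold c, d, edot, eperpdot. split.
      - replace (v1 s) with ((sin (phi i) * sin (phi i) + cos (phi i) * cos (phi i)) * v1 s) at 1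
          by (rewrite Hsc; ring). ring.
      - replace (v2 s) with ((sin (phi i) * sin (phi i) + cos (phi i) * cos (phi i)) * v2 s) at 1
          by (rewrite Hsc; ring). ring. }
    assert (Heps : forall eps, 0 < eps -> exists eta, 0 < eta /\
              forall s, 0 < sigma * s < delta -> Rabs s < eta ->
                Rabs (c s) <= K * Rabs s /\ Rabs (d s - sigma) <= Rabs (c s) /\
                2 * K * Rabs s < eps).
    { intros eps Hep. exists (Rmin s1 (eps / (2 * K + 1))).
      assert (Hm1 : Rmin s1 (eps / (2 * K + 1)) <= s1) by apply Rmin_l.
      assert (Hm2 : Rmin s1 (eps / (2 * K + 1)) <= eps / (2 * K + 1)) by apply Rmin_r.
      split. { apply Rmin_pos; [lra|]. apply Rdiv_lt_0_compat; lra. }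
      intros s Hs Hsa.
      destruct (Hfin s Hs ltac:(lra)) as [A B]. split; [exact A|split; [exact B|]].
      assert (Rabs s * (2 * K + 1) < eps).
      { assert (Rabs s < eps / (2 * K + 1)) by lra.
        apply (Rmult_lt_compat_r (2 * K + 1)) in H0; [|lra].
        replace (eps / (2 * K + 1) * (2 * K + 1)) with eps in H0 by (field; lra). lra. }
      pose proof (Rabs_pos s). nra. }
    exists (- sin (phi i) * sigma), (cos (phi i) * sigma).
    split; [|split].
    + apply eps_lim. intros eps Hep. destruct (Heps eps Hep) as [eta [Heta Hb]].
      exists eta. split; [exact Heta|]. intros s Hs Hsa.
      destruct (Hb s Hs Hsa) as [A [B C]].
      rewrite (proj1 (Hrep s)).
      replace (cos (phi i) * c s - sin (phi i) * d s - - sin (phi i) * sigma)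
        with (- sin (phi i) * (d s - sigma) + cos (phi i) * c s) by ring.
      eapply Rle_lt_trans; [apply perp_bound|]. lra.
    + apply eps_lim. intros eps Hep. destruct (Heps eps Hep) as [eta [Heta Hb]].
      exists eta. split; [exact Heta|]. intros s Hs Hsa.
      destruct (Hb s Hs Hsa) as [A [B C]].
      rewrite (proj2 (Hrep s)).
      replace (sin (phi i) * c s + cos (phi i) * d s - cos (phi i) * sigma)
        with (cos (phi i) * (d s - sigma) + sin (phi i) * c s) by ring.
      eapply Rle_lt_trans; [apply dot_bound|]. lra.
    + apply eps_lim. intros eps Hep. destruct (Heps eps Hep) as [eta [Heta Hb]].
      exists eta. split; [exact Heta|]. intros s Hs Hsa.
      destruct (Hb s Hs Hsa) as [A [B C]].
      rewrite Rminus_0_r. change (Rabs (c s) < eps). pose proof (Rabs_pos s).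
      assert (K * Rabs s <= 2 * K * Rabs s) by nra. lra.
Qed.
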